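(* Let $\delta=x^{\mathbf d}f(\theta)$ be a homogeneous differential operator of degree $\mathbf d$ with $\mathbf d\neq\mathbf 0$, $-\mathbf d\in S$, $\mathbf d=q\mathbf e$ ($q\in\mathbb Z_{\ge1}$, $\mathbf e$ primitive). Suppose there is a subset $\mathcal B\subseteq\mathbb N^n$ compatible with $\mathbf d$ such that (1) $\operatorname{val}(\mathbf a)>-\infty$ for all $\mathbf a\in W_{\mathcal B}$; (2) for all $\mathbf a\in V'_{\mathrm{mon}}(f)\cap W_{\mathcal B}$ and all $i=0,\dots,q-1$, $\mathbf a-i\mathbf e\in V_{\mathrm{mon}}(f)$; (3) for all $\mathbf a,\mathbf b\in V'_{\mathrm{mon}}(f)\cap W_{\mathcal B}$, $\mathbf a-\mathbf b\notin S-\mathbf e$. Then $\delta$ fixes the ideal $I=(x^{\mathbf a}\mid \mathbf a\in V'_{\mathrm{mon}}(f)\cap W_{\mathcal B})$, and $\operatorname{Exp} I=\{\mathbf b\in W_{\mathcal B}:\operatorname{pval}(\mathbf b)\ge 0\}$.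
   Context: Standing notation. Fix $d\ge 1$. Let $\sigma\subseteq\mathbb R^d$ be a full-dimensional, strongly convex rational polyhedral cone, so $\sigma^\vee$ is full-dimensional and strongly convex. $S=\sigma^\vee\cap\mathbb Z^d$, $R=\mathbb C[S]$ with monomial basis $x^{\mathbf a}$, $\mathbf a\in S$. $h_1,\dots,h_n$ are the primitive support functions of the facets of $\sigma^\vee$, so $S=\{\mathbf a\in\mathbb Z^d:h_i(\mathbf a)\ge0\ \forall i\}$. $(g,m)!=\prod_{j=0}^m(g-j)$ for $m\ge0$, $=1$ for $m<0$; $H_{\mathbf d}=\prod_i(h_i,h_i(-\mathbf d)-1)!$. For $f$ divisible by $H_{\mathbf d}$, $\delta=x^{\mathbf d}f(\theta)$ acts by $\delta(x^{\mathbf a})=f(\mathbf a)x^{\mathbf a+\mathbf d}$. $\operatorname{Exp} I=\{\mathbf a\in S:x^{\mathbf a}\in I\}$; $I$ is $\delta$-fixed if $\delta(I)=I$. $V_{\mathrm{mon}}(f)=\{\mathbf a\in\mathbb Z^d:f(\mathbf a)=0\}$; $S-\mathbf e=\{\mathbf s-\mathbf e:\mathbf s\in S\}$. For $\mathbf a\in\mathbb Z^d$, $\operatorname{val}(\mathbf a)=\inf\{t\in\mathbb R:\mathbf a+t\mathbf d\in V_{\mathrm{mon}}(f)\}\in\mathbb R\cup\{\pm\infty\}$ ($\inf\emptyset=+\infty$). When $\operatorname{val}(\mathbf a)$ is finite, $\operatorname{pval}(\mathbf a)=\max\{t\in[\operatorname{val}(\mathbf a),\operatorname{val}(\mathbf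 a)+1):\mathbf a+t\mathbf d\in V_{\mathrm{mon}}(f)\}$ and $\operatorname{vpt}(\mathbf a)=\mathbf a+\operatorname{pval}(\mathbf a)\mathbf d$. $V'_{\mathrm{mon}}(f)=\{\operatorname{vpt}(\mathbf a):\mathbf a\in\mathbb Z^d,\ \operatorname{val}(\mathbf a)\text{ finite}\}$. A tuple $\beta\in\mathbb N^n$ is compatible with $\mathbf d$ if for every $i$, $\beta_i=0$ or $h_i(\mathbf d)=0$; $\mathcal B\subseteq\mathbb N^n$ is compatible with $\mathbf d$ if each element is. $W_\beta=\{\mathbf a\in S: h_i(\mathbf a)\ge\beta_i\ \forall i\}$, $W_{\mathcal B}=\bigcup_{\beta\in\mathcal B}W_\beta$. *)

(* Defs.v *)
(* C is modelled as  R[i] = complex R  for an arbitrary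
   R : realType (every realType is a model of the real numbers). *)
From HB Require Import structures.
From mathcomp Require Import all_boot all_order all_algebra.
From mathcomp Require Import reals.
From mathcomp Require Import complex.
From mathcomp Require Import mpoly.
Set Implicit Arguments. Unset Strict Implicit. Unset Printing Implicit Defensive.
Import Order.TTheory GRing.Theory Num.Theory.
Local Open Scope ring_scope.

Section Defs.
Variables (R : realType) (dm n : nat).
Local Notation C := (R[i])%C.
Local Notation vec := 'rV[int]_dm.

Definition hv (hh a : vec) : int := \sum_(k < dm) hh 0 k * a 0 k.

Definition primitive (e : vec) : Prop :=
  e != 0 /\ forall (m : int) (c : vec), e = m *: c -> `|m| = 1.

(* h_1..h_n are the primitive support functions of the facets of a
   full-dimensional, strongly convex rational polyhedral cone
   sigma^vee = {x | h_i(x) >= 0 for all i}, listed without repetition. *)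
Definition facet_data (h : 'I_n -> vec) : Prop :=
  [/\ forall i, primitive (h i),
      exists a : vec, forall i, 0 < hv (h i) a,
      (* strongly convex (contains no line) *)
      forall a : vec, (forall i, hv (h i) a = 0) -> a = 0 &
      (* irredundant: each inequality defines a facet *)
      forall i, exists a : vec, hv (h i) a < 0 /\ forall j, j != i -> 0 <= hv (h j) a].

Definition inS (h : 'I_n -> vec) (a : vec) : Prop := forall i, 0 <= hv (h i) a.

Definition hpoly (hh : vec) : {mpoly C[dm]} := \sum_(k < dm) ((hh 0 k)%:~R)%:MP * 'X_k.

Definition falling (g : {mpoly C[dm]}) (m : int) : {mpoly C[dm]} :=
  if m < 0 then 1 else \prod_(j < `|m|.+1) (g - (j%:R)%:MP).

Definition Hd (h : 'I_n -> vec) (d : vec) : {mpoly C[dm]} :=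
  \prod_(i < n) falling (hpoly (h i)) (hv (h i) (- d) - 1).

(* delta = x^d f(theta) is a homogeneous differential operator of degree d *)
Definition homog_op (h : 'I_n -> vec) (d : vec) (f : {mpoly C[dm]}) : Prop :=
  exists g : {mpoly C[dm]}, f = Hd h d * g.

Definition evalZ (f : {mpoly C[dm]}) (a : vec) : C := f.@[fun k => (a 0 k)%:~R].

Definition Vmon (f : {mpoly C[dm]}) (a : vec) : Prop := evalZ f a = 0.

Definition onLine (a d : vec) (t : R) (c : vec) : Prop :=
  forall k, ((c 0 k)%:~R : R) = (a 0 k)%:~R + t * (d 0 k)%:~R.

Definition Tset (f : {mpoly C[dm]}) (d a : vec) (t : R) : Prop :=
  exists c : vec, onLine a d t c /\ Vmon f c.

(* val(a) > -oo, i.e. the set above is bounded below (inf of the empty set is +oo) *)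
Definition val_gt_minf (f : {mpoly C[dm]}) (d a : vec) : Prop :=
  exists lb : R, forall t, Tset f d a t -> lb <= t.

Definition val_is (f : {mpoly C[dm]}) (d a : vec) (v : R) : Prop :=
  (forall t, Tset f d a t -> v <= t) /\
  (forall lb, (forall t, Tset f d a t -> lb <= t) -> lb <= v).

Definition pval_is (f : {mpoly C[dm]}) (d a : vec) (p : R) : Prop :=
  exists v, [/\ val_is f d a v, v <= p < v + 1, Tset f d a p &
            forall t, Tset f d a t -> v <= t < v + 1 -> t <= p].

(* b in V'_mon(f): b = vpt(a) for some a with val(a) finite *)
Definition inVp (f : {mpoly C[dm]}) (d b : vec) : Prop :=
  exists (a : vec) (p : R), pval_is f d a p /\ onLine a d p b.

Definition compatible (h : 'I_n -> vec) (d : vec) (B : ('I_n -> nat) -> Prop) : Prop :=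
  forall beta, B beta -> forall i, beta i = 0%N \/ hv (h i) d = 0.

Definition inW (h : 'I_n -> vec) (beta : 'I_n -> nat) (a : vec) : Prop :=
  inS h a /\ forall i, (beta i)%:Z <= hv (h i) a.

Definition inWB (h : 'I_n -> vec) (B : ('I_n -> nat) -> Prop) (a : vec) : Prop :=
  exists beta, B beta /\ inW h beta a.

Definition inSminus (h : 'I_n -> vec) (e c : vec) : Prop :=
  exists s, inS h s /\ c = s - e.

(* an element of C[S] is a finitely supported coefficient function Z^d -> C with
   support in S; finite formal sums are written as lists of terms (c, a) = c x^a *)
Definition term := (C * vec)%type.
Definition coefL (p : seq term) (b : vec) : C := \sum_(t <- p | t.2 == b) t.1.
Definition inRL (h : 'I_n -> vec) (p : seq term) : Prop := forall t, t \in p -> inS h t.2.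
Definition mulL (p q : seq term) : seq term :=
  [seq (t.1 * u.1, t.2 + u.2) | t <- p, u <- q].
Definition monoL (a : vec) : seq term := [:: (1, a)].

Definition inIdeal (h : 'I_n -> vec) (G : vec -> Prop) (F : vec -> C) : Prop :=
  exists rs : seq (seq term * vec),
    (forall rg, rg \in rs -> G rg.2 /\ inRL h rg.1) /\
    forall b, F b = coefL (flatten [seq mulL rg.1 (monoL rg.2) | rg <- rs]) b.

(* delta = x^d f(theta):  delta(sum_a F(a) x^a) = sum_a f(a) F(a) x^(a+d) *)
Definition deltaF (f : {mpoly C[dm]}) (d : vec) (F : vec -> C) : vec -> C :=
  fun c => evalZ f (c - d) * F (c - d).

Definition delta_fixed (h : 'I_n -> vec) (f : {mpoly C[dm]}) (d : vec) (G : vec -> Prop) : Prop :=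
  (forall F, inIdeal h G F -> inIdeal h G (deltaF f d F)) /\
  (forall F, inIdeal h G F -> exists F', inIdeal h G F' /\ forall c, F c = deltaF f d F' c).

Definition monoF (a : vec) : vec -> C := fun c => (c == a)%:R.

Definition inExp (h : 'I_n -> vec) (G : vec -> Prop) (a : vec) : Prop :=
  inS h a /\ inIdeal h G (monoF a).

End Defs.

(* Main.v *)
Require Import Defs.
From HB Require Import structures.
From mathcomp Require Import all_boot all_order all_algebra.
From mathcomp Require Import reals complex mpoly.
From mathcomp Require Import zify ring lra.
Set Implicit Arguments. Unset Strict Implicit. Unset Printing Implicit Defensive.
Import Order.TTheory GRing.Theory Num.Theory.
Local Open Scope ring_scope.

Section Vec.
Variable dm : nat.
Local Notation vec := 'rV[int]_dm.

Lemma hvD (hh a b : vec) : hv hh (a + b) = hv hh a + hv hh b.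
Proof. by rewrite /hv -big_split; apply: eq_bigr => k _; rewrite mxE mulrDr. Qed.

Lemma hvZ (hh a : vec) (s : int) : hv hh (s *: a) = s * hv hh a.
Proof. by rewrite /hv mulr_sumr; apply: eq_bigr => k _; rewrite mxE mulrCA. Qed.

Lemma hvN (hh a : vec) : hv hh (- a) = - hv hh a.
Proof. by rewrite -scaleN1r hvZ mulN1r. Qed.

Lemma hvB (hh a b : vec) : hv hh (a - b) = hv hh a - hv hh b.
Proof. by rewrite hvD hvN. Qed.

Lemma hvMn (hh a : vec) (k : nat) : hv hh (a *+ k) = hv hh a *+ k.
Proof. by rewrite -scaler_nat hvZ mulr_natl. Qed.

Lemma prim_int (R : realType) (e : vec) (r : R) : primitive e ->
  (forall k, exists m : int, r * (e 0 k)%:~R = m%:~R) -> exists z : int, r = z%:~R.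
Proof.
case=> enz prim Hm.
have [k0 ek0] : exists k0, e 0 k0 != 0.
  apply/existsP; apply: contraR enz => /existsPn H; apply/eqP/rowP => k.
  by rewrite mxE; apply/eqP; move: (H k); rewrite negbK.
have [m0 Hm0] := Hm k0.
pose x : rat := m0%:~R / (e 0 k0)%:~R.
have ek0R : ((e 0 k0)%:~R : R) != 0 by rewrite intr_eq0.
have ek0Q : ((e 0 k0)%:~R : rat) != 0 by rewrite intr_eq0.
have Hx k : exists mk : int, x * (e 0 k)%:~R = mk%:~R /\ r * (e 0 k)%:~R = mk%:~R.
  have [mk Hmk] := Hm k; exists mk; split => //.
  have E : mk * e 0 k0 = m0 * e 0 k.
    apply: (@intr_inj R); rewrite !rmorphM /= -Hmk -Hm0; ring.
  rewrite /x; apply: (mulIf ek0Q); rewrite mulrAC divfK // -!rmorphM /=.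
  by rewrite -E.
have Hd k : e 0 k \in dvdz (denq x).
  have [mk [Hk _]] := Hx k.
  have E : numq x * e 0 k = mk * denq x.
    apply: (@intr_inj rat); rewrite !rmorphM /= numqE -Hk; ring.
  have cop : coprimez (denq x) (numq x).
    by rewrite coprimez_sym coprimezE coprime_num_den.
  rewrite -(Gauss_dvdzr (e 0 k) cop) E; apply/dvdzP; by exists mk.
have ed : e = (denq x) *: \row_k divz (e 0 k) (denq x).
  apply/rowP => k; rewrite !mxE mulrC divzK //.
have := prim _ _ ed; rewrite ger0_norm ?(ltW (denq_gt0 x)) // => d1.
exists (numq x).
have [mk [Hk Hr]] := Hx k0.
have E : numq x * e 0 k0 = mk.
  apply: (@intr_inj rat); rewrite !rmorphM /= numqE d1 mulr1 -Hk //.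
apply: (mulIf ek0R); by rewrite Hr -E rmorphM.
Qed.
End Vec.
Section Main.
Variables (R : realType) (dm n : nat) (h : 'I_n -> 'rV[int]_dm) (d e : 'rV[int]_dm)
  (q : nat) (f : {mpoly (R[i])%C[dm]}) (B : ('I_n -> nat) -> Prop).
Local Notation vec := 'rV[int]_dm.
Local Notation C := (R[i])%C.
Hypothesis Hhom : homog_op h d f.
Hypothesis HdS : inS h (- d).
Hypothesis Hq : (1 <= q)%N.
Hypothesis Hprim : primitive e.
Hypothesis Hde : d = e *+ q.

Lemma meval_hpoly (hh c : vec) :
  meval (fun k => ((c 0 k)%:~R : C)) (hpoly R hh) = (hv hh c)%:~R.
Proof.
rewrite /hpoly raddf_sum /hv rmorph_sum; apply: eq_bigr => k _ /=.
by rewrite mevalM mevalC mevalXU rmorphM.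
Qed.

Lemma Hd_zero (c : vec) : inS h c -> (exists i, hv (h i) (c + d) < 0) -> evalZ f c = 0.
Proof.
move=> Sc [i Hi]; case: Hhom => g ->.
rewrite /evalZ mevalM /Hd (big_morph _ (mevalM _) (meval1 _)) (bigD1 i) //=.
set x := hv (h i) c.
have x0 : 0 <= x := Sc i.
rewrite hvD in Hi.
have Hm : x <= hv (h i) (- d) - 1 by rewrite hvN; lia.
rewrite /falling.
have -> : (hv (h i) (- d) - 1 < 0) = false by apply/negbTE; rewrite -leNgt; lia.
set m := hv (h i) (- d) - 1.
have xm : (`|x| < `|m|.+1)%N by lia.
rewrite (big_morph _ (mevalM _) (meval1 _)) (bigD1 (Ordinal xm)) //=.
rewrite mevalB mevalC meval_hpoly -/x.
have -> : (x%:~R : C) = (`|x|%N)%:R by rewrite -{1}(gez0_abs x0).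
by rewrite subrr !mul0r.
Qed.

Lemma dE k : ((d 0 k)%:~R : R) = (e 0 k)%:~R * q%:R.
Proof. by rewrite Hde -scaler_nat mxE rmorphM /= mulrC rmorph_nat. Qed.

Definition Zb (b : vec) (s : int) : bool := evalZ f (b + s *: e) == 0.

Lemma Tset_iff b t : Tset f d b t <-> exists s : int, t * q%:R = s%:~R /\ Zb b s.
Proof.
split.
  case=> c [Hon Hv].
  have [z Hz] : exists z : int, t * q%:R = z%:~R.
    apply: (prim_int Hprim) => k; exists (c 0 k - b 0 k).
    rewrite rmorphB /= (Hon k) dE; ring.
  exists z; split=> //; rewrite /Zb.
  have -> : b + z *: e = c.
    apply/rowP => k; apply: (@intr_inj R).
    by rewrite !mxE rmorphD rmorphM /= (Hon k) dE -Hz; ring.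
  exact/eqP.
case=> s [Hs Hz]; exists (b + s *: e); split; last exact/eqP.
by move=> k; rewrite !mxE rmorphD rmorphM /= dE -Hs; ring.
Qed.

Definition pvi (b : vec) (sg : int) : Prop := exists s0 : int,
  [/\ Zb b s0, forall s, Zb b s -> s0 <= s, s0 <= sg < s0 + q%:Z, Zb b sg &
      forall s, Zb b s -> s < s0 + q%:Z -> s <= sg].

Lemma qpos : 0 < (q%:R : R). Proof. by rewrite ltr0n. Qed.
Lemma qnz : (q%:R : R) != 0. Proof. by rewrite gt_eqF // qpos. Qed.
Lemma lemq (x y : R) : (x * q%:R <= y * q%:R) = (x <= y).
Proof. by rewrite ler_pM2r // qpos. Qed.
Lemma ltmq (x y : R) : (x * q%:R < y * q%:R) = (x < y).
Proof. by rewrite ltr_pM2r // qpos. Qed.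
Lemma intq (s : int) : ((s%:~R : R) / q%:R) * q%:R = s%:~R.
Proof. by rewrite divfK // qnz. Qed.
Lemma qint : ((q%:Z)%:~R : R) = q%:R.
Proof. by []. Qed.

Lemma Tset_int b s : Zb b s -> Tset f d b (s%:~R / q%:R).
Proof. by move=> Zs; apply/Tset_iff; exists s; rewrite intq. Qed.

Lemma pval_to_int b p : pval_is f d b p -> exists sg, pvi b sg /\ p * q%:R = sg%:~R.
Proof.
case=> v [[vlb vglb] /andP[vp pv1] Tp pmax].
have [sg [Hsg Zsg]] := (Tset_iff b p).1 Tp.
have low s : Zb b s -> sg - q%:Z < s.
  move=> Zs; have vs := vlb _ (Tset_int Zs).
  rewrite -lemq intq in vs; rewrite -ltmq mulrDl mul1r in pv1.
  rewrite -(ltr_int R) rmorphB /= qint -Hsg; lra.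
have exP : exists k : nat, Zb b (sg - q%:Z + 1 + k%:Z).
  by exists (q - 1)%N; have -> : sg - q%:Z + 1 + (q - 1)%N%:Z = sg by lia.
case: (ex_minnP exP) => k0 Zk0 kmin.
have k0q : (k0 <= q - 1)%N.
  by apply: kmin; have -> : sg - q%:Z + 1 + (q - 1)%N%:Z = sg by lia.
have allge s : Zb b s -> sg - q%:Z + 1 + k0%:Z <= s.
  move=> Zs; have := low _ Zs => ls.
  pose j := absz (s - (sg - q%:Z + 1))%R.
  have Hk : Zb b (sg - q%:Z + 1 + j%:Z).
    by have -> : sg - q%:Z + 1 + j%:Z = s by rewrite /j; lia.
  have := kmin _ Hk; lia.
exists sg; split=> //; exists (sg - q%:Z + 1 + k0%:Z); split=> //.
- by apply/andP; split; lia.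
- move=> s Zs sl.
  have Ts := Tset_int Zs.
  have v0 : (sg - q%:Z + 1 + k0%:Z)%:~R / q%:R <= v.
    apply: vglb => t /Tset_iff [s' [Hs' Zs']].
    by rewrite -lemq intq Hs' ler_int; apply: allge.
  have := pmax _ Ts; rewrite (vlb _ Ts) /=.
  have Hlt : s%:~R / q%:R < v + 1.
    rewrite -lemq intq in v0.
    have sl' : (s%:~R : R) < (sg - q%:Z + 1 + k0%:Z)%:~R + q%:R.
      by rewrite -qint -rmorphD ltr_int.
    rewrite -ltmq intq mulrDl mul1r; lra.
  rewrite Hlt => /(_ isT); rewrite -lemq intq Hsg ler_int //.
Qed.

Lemma int_to_pval b sg : pvi b sg -> pval_is f d b (sg%:~R / q%:R).
Proof.
case=> s0 [Z0 min0 /andP[s0s ss0] Zsg smax].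
exists (s0%:~R / q%:R); split.
- split.
    move=> t /Tset_iff [s [Hs Zs]].
    by rewrite -lemq intq Hs ler_int; apply: min0.
  by move=> lb Hlb; apply: Hlb; apply: Tset_int.
- apply/andP; split; first by rewrite -lemq !intq ler_int.
  by rewrite -ltmq intq mulrDl mul1r intq -qint -rmorphD ltr_int.
- exact: Tset_int.
- move=> t /Tset_iff [s [Hs Zs]] /andP[_ Ht].
  rewrite -lemq intq Hs ler_int; apply: smax => //.
  by rewrite -(ltr_int R) rmorphD /= qint -Hs -ltmq mulrDl mul1r intq in Ht *.
Qed.

Lemma pvi_uniq b s1 s2 : pvi b s1 -> pvi b s2 -> s1 = s2.
Proof.
case=> a [Za mina /andP[as1 s1a] Z1 max1].
case=> c [Zc minc /andP[cs2 s2c] Z2 max2].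
have ac : a = c by apply/eqP; rewrite eq_le (mina _ Zc) (minc _ Za).
subst c; apply/eqP; rewrite eq_le (max1 _ Z2 s2c) (max2 _ Z1 s1a) //.
Qed.

Lemma Zb_shift b k s : Zb (b + k *: e) s = Zb b (s + k).
Proof. by rewrite /Zb -addrA -scalerDl (addrC k). Qed.

Lemma pvi_shift b k sg : pvi b sg -> pvi (b + k *: e) (sg - k).
Proof.
case=> a [Za mina /andP[as1 s1a] Z1 max1].
exists (a - k); split.
- by rewrite Zb_shift subrK.
- by move=> s; rewrite Zb_shift => /mina; lia.
- by apply/andP; split; lia.
- by rewrite Zb_shift subrK.
- move=> s; rewrite Zb_shift => /max1 H sl; have : s + k <= sg by apply: H; lia.
  lia.
Qed.


Hypothesis Hfac : facet_data h.
Hypothesis Hcomp : compatible h d B.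
Hypothesis H1 : forall a, inWB h B a -> val_gt_minf f d a.
Hypothesis H2 : forall a, inVp f d a -> inWB h B a ->
     forall i : nat, (i < q)%N -> Vmon f (a - e *+ i).

Lemma dZ : d = q%:Z *: e.
Proof. by rewrite Hde -scaler_nat natz. Qed.

Lemma hvd i : hv (h i) d = q%:Z * hv (h i) e.
Proof. by rewrite dZ hvZ. Qed.

Lemma he_le0 i : hv (h i) e <= 0.
Proof. have := HdS i; rewrite hvN hvd; nia. Qed.

Lemma e_neg : exists i0, hv (h i0) e < 0.
Proof.
case: (boolP [exists i, hv (h i) e < 0]) => [/existsP //|/existsPn H].
exfalso; case: Hprim => enz _; case: Hfac => _ _ sc _.
move/eqP: enz; apply; apply: sc => i.
have := H i; have := he_le0 i; lia.
Qed.

Lemma hv_e_zero i : hv (h i) d = 0 -> hv (h i) e = 0.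
Proof. rewrite hvd => /eqP; rewrite mulf_eq0 => /orP[|/eqP //]; lia. Qed.

Lemma W_down beta b s : B beta -> inW h beta b ->
  (forall i, 0 <= hv (h i) (b + s *: e)) -> inW h beta (b + s *: e).
Proof.
move=> Bb [Sb Wb] Hs; split=> // i.
case: (Hcomp Bb i) => [-> //|/hv_e_zero he0].
by rewrite hvD hvZ he0 mulr0 addr0.
Qed.

Lemma W_addS beta b s : inW h beta b -> inS h s -> inW h beta (b + s).
Proof.
move=> [Sb Wb] Ss; split=> i; have := Ss i; rewrite hvD.
  by have := Sb i; lia.
by have := Wb i; lia.
Qed.

Definition Gs a := inVp f d a /\ inWB h B a.

Lemma onLine_int b sg : onLine b d ((sg%:~R : R) / q%:R) (b + sg *: e).
Proof.
move=> k; rewrite !mxE rmorphD rmorphM /= dE.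
have -> : forall x y : R, x / q%:R * (y * q%:R) = y * (x / q%:R * q%:R) by move=> x y; ring.
by rewrite intq mulrC.
Qed.

Lemma line_info b : inWB h B b -> exists sg, [/\ pvi b sg,
  (forall s, Zb b s -> sg - q%:Z < s),
  (forall s, sg - q%:Z < s -> s <= sg -> Zb b s) & Gs (b + sg *: e)].
Proof.
move=> WBb; case: (WBb) => beta [Bb Wb].
have [i0 hi0] := e_neg.
pose Pk (k : nat) : bool := [forall i, 0 <= hv (h i) (b + k%:Z *: e)].
have P0 : Pk 0%N.
  by apply/forallP => i; rewrite scale0r addr0; exact: Wb.1.
have bound k : Pk k -> (k <= absz (hv (h i0) b))%N.
  move/forallP/(_ i0); rewrite hvD hvZ; nia.
case: (ex_maxnP (ex_intro _ 0%N P0) bound) => smax Psmax maxP.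
have hvs i : forall s : int, s <= smax%:Z -> 0 <= hv (h i) (b + s *: e).
  move=> s ss; move/forallP/(_ i): Psmax; rewrite !hvD !hvZ.
  have := he_le0 i; nia.
pose z := smax%:Z - q%:Z + 1.
have Zz : Zb b z.
  apply/eqP; apply: Hd_zero; first by move=> i; apply: hvs; rewrite /z; lia.
  have : ~~ Pk smax.+1 by apply/negP => /maxP; rewrite ltnn.
  move/forallPn => [i Hi]; exists i.
  have -> : b + z *: e + d = b + (smax.+1)%:Z *: e.
    by rewrite dZ -addrA -scalerDl /z; congr (_ + _ *: _); lia.
  by rewrite ltNge.
have [lb Hlb] := H1 WBb.
pose N0 := Num.floor (lb * q%:R).
have N0le s : Zb b s -> N0 <= s.
  move=> Zs; have := Hlb _ (Tset_int Zs); rewrite -lemq intq => H.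
  rewrite -(ler_int R); apply: le_trans H; exact: floor_le_tmp.
have exP : exists k : nat, Zb b (N0 + k%:Z).
  exists (absz (z - N0))%R; have := N0le _ Zz => H.
  by have -> : N0 + (absz (z - N0))%R%:Z = z by lia.
case: (ex_minnP exP) => k0 Zk0 kmin.
pose s0 := N0 + k0%:Z.
have s0min s : Zb b s -> s0 <= s.
  move=> Zs; have := N0le _ Zs => H.
  have Hk : Zb b (N0 + (absz (s - N0))%R%:Z).
    by have -> : N0 + (absz (s - N0))%R%:Z = s by lia.
  have := kmin _ Hk; rewrite /s0; lia.
pose Qk (k : nat) : bool := (k < q)%N && Zb b (s0 + k%:Z).
have Q0 : Qk 0%N by rewrite /Qk Hq addr0.
have qbound k : Qk k -> (k <= q)%N by case/andP => /ltnW.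
case: (ex_maxnP (ex_intro _ 0%N Q0) qbound) => k1 /andP[k1q Zk1] k1max.
pose sg := s0 + k1%:Z.
have pv : pvi b sg.
  exists s0; split=> //.
  - by apply/andP; rewrite /sg; split; lia.
  - move=> s Zs sl; have := s0min _ Zs => H.
    have Hk : Qk (absz (s - s0))%R.
      apply/andP; split; first lia.
      by have -> : s0 + (absz (s - s0))%R%:Z = s by lia.
    have := k1max _ Hk; rewrite /sg; lia.
have sgle : sg <= smax%:Z.
  have := s0min _ Zz; rewrite /sg /z; lia.
have Gsg : Gs (b + sg *: e).
  split.
    by exists b, (sg%:~R / q%:R); split; [exact: int_to_pval | exact: onLine_int].
  exists beta; split=> //; apply: W_down => // i; exact: hvs.
exists sg; split=> //.
- move=> s /s0min; rewrite /sg; lia.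
- move=> s s1 s2.
  have Hi : (absz (sg - s) < q)%N by lia.
  have := H2 Gsg.1 Gsg.2 Hi; rewrite /Vmon => H.
  apply/eqP; rewrite -H; congr (evalZ f _).
  rewrite -scaler_nat natz -addrA -scalerBl; congr (_ + _ *: _); lia.
Qed.

Hypothesis H3 : forall a b, inVp f d a -> inWB h B a -> inVp f d b -> inWB h B b ->
     ~ inSminus h e (a - b).

Definition Pp b := inWB h B b /\ exists p : R, pval_is f d b p /\ 0 <= p.
Definition Es c := exists g, Gs g /\ inS h (c - g).

Lemma P_sig b sg : inWB h B b -> pvi b sg -> (Pp b <-> 0 <= sg).
Proof.
move=> Wb pv; split.
  case=> _ [p [Hp p0]]; have [sg' [pv' Hs]] := pval_to_int Hp.
  rewrite (pvi_uniq pv pv'); have := mulr_ge0 p0 (ltW qpos).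
  by rewrite Hs ler0z.
move=> s0; split=> //; exists ((sg%:~R : R) / q%:R); split; first exact: int_to_pval.
by apply: divr_ge0; [rewrite ler0z | exact: ltW qpos].
Qed.

Lemma G_P g : Gs g -> Pp g.
Proof.
case=> [[a [p [Hp Hon]]] Wg]; have [sg [pv Hs]] := pval_to_int Hp.
have ga : g = a + sg *: e.
  apply/rowP => k; apply: (@intr_inj R).
  by rewrite !mxE rmorphD rmorphM /= (Hon k) dE (mulrC (e 0 k)%:~R) mulrA Hs.
have := pvi_shift sg pv; rewrite subrr -ga => pv0.
by apply/(P_sig Wg pv0).
Qed.

Lemma P_addS b s : Pp b -> inS h s -> Pp (b + s).
Proof.
move=> Pb Ss; have Wb := Pb.1.
have [sg [pv _ _ Gb]] := line_info Wb.
have s0 := (P_sig Wb pv).1 Pb.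
have Wbs : inWB h B (b + s).
  by case: Wb => beta [Bb Wb]; exists beta; split => //; apply: W_addS.
have [sg' [pv' _ _ Gb']] := line_info Wbs.
apply/(P_sig Wbs pv'); rewrite leNgt; apply/negP => neg.
apply: (H3 Gb'.1 Gb'.2 Gb.1 Gb.2).
exists (s + (sg - sg' - 1) *: (- e)); split.
  by move=> i; rewrite hvD hvZ hvN; have := Ss i; have := he_le0 i; nia.
by apply/rowP => k; rewrite !mxE; ring.
Qed.

Lemma P_E b : Pp b -> Es b.
Proof.
move=> Pb; have Wb := Pb.1.
have [sg [pv _ _ Gb]] := line_info Wb.
have s0 := (P_sig Wb pv).1 Pb.
exists (b + sg *: e); split=> // i.
by rewrite hvB hvD hvZ; have := he_le0 i; nia.
Qed.

Lemma E_P b : Es b -> Pp b.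
Proof.
case=> g [Gg Sbg]; have -> : b = g + (b - g) by rewrite addrC subrK.
exact: P_addS (G_P Gg) Sbg.
Qed.

Lemma E_S b : Es b -> inS h b.
Proof. by move=> /E_P [[beta [_ [Sb _]]] _]. Qed.

Lemma M1 a : Es a -> evalZ f a != 0 -> Es (a + d).
Proof.
move=> Ea fa; have Pa := E_P Ea; have Wa := Pa.1.
have [sg [pv lo blk _]] := line_info Wa.
have s0 := (P_sig Wa pv).1 Pa.
have sgq : q%:Z <= sg.
  rewrite leNgt; apply/negP => lt.
  have := blk 0 ltac:(lia) s0; rewrite /Zb scale0r addr0 => /eqP H.
  by rewrite H eqxx in fa.
have Sad : inS h (a + d).
  case: (boolP [forall i, 0 <= hv (h i) (a + d)]) => [/forallP //|/forallPn [i Hi]].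
  have : evalZ f a = 0.
    by apply: Hd_zero; [exact: E_S | exists i; rewrite ltNge].
  by move/eqP; rewrite (negbTE fa).
have Wad : inWB h B (a + d).
  case: Wa => beta [Bb Wb]; exists beta; split=> //.
  by rewrite dZ; apply: W_down => // i; rewrite -dZ; exact: Sad.
have pvd : pvi (a + d) (sg - q%:Z) by rewrite dZ; exact: pvi_shift.
apply: P_E; apply/(P_sig Wad pvd); lia.
Qed.

Lemma M2 b : Es b -> evalZ f (b - d) != 0 /\ Es (b - d).
Proof.
move=> Eb.
have Ebd : Es (b - d).
  case: Eb => g [Gg Sbg]; exists g; split=> // i.
  have -> : b - d - g = (b - g) + (- d) by rewrite addrAC.
  by rewrite hvD; have := Sbg i; have := HdS i; lia.
split=> //.
have Pb := E_P Eb; have Wb := Pb.1.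
have [sg [pv _ _ _]] := line_info Wb.
have s0 := (P_sig Wb pv).1 Pb.
have Wbd := (E_P Ebd).1.
have [sg2 [pv2 lo2 _ _]] := line_info Wbd.
have e1 : b - d = b + (- q%:Z) *: e by rewrite dZ scaleNr.
have := pvi_shift (- q%:Z) pv; rewrite -e1 => pv2'.
have := pvi_uniq pv2 pv2' => E2.
apply/negP => /eqP H.
have : Zb (b - d) 0 by rewrite /Zb scale0r addr0 H.
move/lo2; lia.
Qed.

Local Notation Lof rs := (flatten [seq mulL rg.1 (monoL R rg.2) | rg <- rs]).

Lemma ideal_fwd (F : vec -> C) : inIdeal h Gs F -> exists l : seq vec, forall c, F c != 0 -> c \in l /\ Es c.
Proof.
case=> rs [Hrs HF].
have memL t : t \in Lof rs -> Es t.2.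
  move/flatten_mapP => [rg rgin] /allpairsP [[u w] [uin win ->]] /=.
  move: win => /=; rewrite /monoL mem_seq1 => /eqP -> /=.
  have [Gg Srg] := Hrs _ rgin.
  by exists rg.2; split => //; rewrite addrK; apply: Srg.
exists (map snd (Lof rs)) => c Fc.
move: Fc; rewrite HF /coefL.
case: (boolP (has (fun t : term R dm => t.2 == c) (Lof rs))) => [/hasP [t tin /eqP tc] _ | /hasPn H].
  split; first by apply/mapP; exists t.
  by rewrite -tc; apply: memL.
rewrite big1_seq ?eqxx // => t /andP[tc tin].
by have := H t tin; rewrite tc.
Qed.

Lemma build (F : vec -> C) (l : seq vec) : uniq l -> (forall c, c \in l -> Es c) ->
  exists rs, (forall rg, rg \in rs -> Gs rg.2 /\ inRL h rg.1) /\
    forall c, coefL (Lof rs) c = if c \in l then F c else 0.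
Proof.
elim: l => [|x l IH] /=.
  by move=> _ _; exists [::]; split=> // c; rewrite /coefL big_nil.
move=> /andP[xnl ul] El.
have [g [Gg Sxg]] := El x (mem_head _ _).
have [rs [Hrs Hc]] := IH ul (fun c cl => El c (ltac:(by rewrite in_cons cl orbT))).
exists (([:: (F x, x - g)], g) :: rs); split.
  move=> rg; rewrite in_cons => /orP[/eqP -> | /Hrs //]; split=> //.
  by move=> t; rewrite mem_seq1 => /eqP -> /=.
move=> c; rewrite /coefL /= big_cons /=.
have := Hc c; rewrite /coefL => ->.
rewrite subrK mulr1 in_cons.
case: (eqVneq x c) => [<-|xc]; first by rewrite ?eqxx (negbTE xnl) addr0.
by rewrite ?(eq_sym c) ?(negbTE xc).
Qed.

Lemma ideal_bwd (F : vec -> C) (l : seq vec) : (forall c, F c != 0 -> c \in l /\ Es c) -> inIdeal h Gs F.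
Proof.
move=> Hl.
pose l' := undup (filter (fun c => F c != 0) l).
have El c : c \in l' -> Es c by rewrite mem_undup mem_filter => /andP[/Hl[]].
have [rs [Hrs Hc]] := build F (undup_uniq _) El.
exists rs; split=> // c; rewrite Hc.
case: ifP => // cl; apply/eqP; apply: contraFT cl => Fc.
by rewrite mem_undup mem_filter Fc; case: (Hl c Fc).
Qed.

Lemma main_sec : delta_fixed h f d Gs /\ (forall b, inExp R h Gs b <-> Pp b).
Proof.
split; first split.
- move=> F /ideal_fwd [l Hl].
  apply: (@ideal_bwd _ (map (fun c => c + d) l)) => c.
  rewrite /deltaF mulf_eq0 negb_or => /andP[fz Fz].
  have [cl Ec] := Hl _ Fz; split.
    by apply/mapP; exists (c - d) => //; rewrite subrK.
  by have := M1 Ec fz; rewrite subrK.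
- move=> F IF; have [l Hl] := ideal_fwd IF.
  exists (fun c => F (c + d) / evalZ f c); split.
    apply: (@ideal_bwd _ (map (fun c => c - d) l)) => c.
    rewrite mulf_eq0 negb_or => /andP[Fz _].
    have [cl Ec] := Hl _ Fz; split.
      by apply/mapP; exists (c + d) => //; rewrite addrK.
    by have := (M2 Ec).2; rewrite addrK.
  move=> c; rewrite /deltaF subrK.
  case: (eqVneq (F c) 0) => [->|Fc]; first by rewrite mul0r mulr0.
  have [_ Ec] := Hl _ Fc; have [fz _] := M2 Ec.
  by rewrite mulrC divfK.
- move=> b; split.
    case=> Sb /ideal_fwd [l Hl]; apply: E_P.
    by case: (Hl b); rewrite // /monoF eqxx oner_neq0.
  move=> Pb; have Eb := P_E Pb; split; first exact: E_S.
  apply: (@ideal_bwd _ [:: b]) => c; rewrite /monoF.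
  case: (eqVneq c b) => [-> _|_]; last by rewrite eqxx.
  by split => //; rewrite mem_seq1.
Qed.

End Main.

Theorem mainTheorem7 (R : realType) (dm n : nat)
  (h : 'I_n -> 'rV[int]_dm) (d e : 'rV[int]_dm) (q : nat)
  (f : {mpoly (R[i])%C[dm]}) (B : ('I_n -> nat) -> Prop) :
  (0 < dm)%N ->
  facet_data h ->
  homog_op h d f ->
  d != 0 ->
  inS h (- d) ->
  (1 <= q)%N -> primitive e -> d = e *+ q ->
  compatible h d B ->
  (forall a, inWB h B a -> val_gt_minf f d a) ->
  (forall a, inVp f d a -> inWB h B a ->
     forall i : nat, (i < q)%N -> Vmon f (a - e *+ i)) ->
  (forall a b, inVp f d a -> inWB h B a -> inVp f d b -> inWB h B b ->
     ~ inSminus h e (a - b)) ->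
  let G := fun a => inVp f d a /\ inWB h B a in
  delta_fixed h f d G /\
  (forall b, inExp R h G b <-> (inWB h B b /\ exists p : R, pval_is f d b p /\ 0 <= p)).
Proof.
move=> _ Hfac Hhom _ HdS Hq Hprim Hde Hcomp H1 H2 H3 G.
exact: (main_sec Hhom HdS Hq Hprim Hde Hfac Hcomp H1 H2 H3).
Qed.
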